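(* Let $K$ be a uniformly bounded strictly positive definite kernel on ${\mathscr X}$, $\mu$ a probability measure on ${\mathscr X}$, $r=(r_0,\dots,r_p)^T$ bounded measurable functions with $r_0\equiv1$ and $\mathbf M_r=\int r\,r^T\,d\mu$ nonsingular, and $x_1,\dots,x_n\in{\mathscr X}$ pairwise distinct. Take $h=r$, so $\mathbf H_n=\mathbf R_n$ and $\mathbf B(\mu)=\mathbf M_r$. Assume $\mathbf R_n$ has full column rank and $\widetilde{\mathbf K}_n$ is nonsingular. Then for every $y\in\mathbb{R}^n$, with $\widehat{\mathbf I}_n$ and $\mathbf V_n$ as defined in the context, $$\widehat{\mathbf I}_n=\mathbf M_r(\mathbf R_n^T\widetilde{\mathbf K}_n^{-1}\mathbf R_n)^{-1}\mathbf R_n^T\widetilde{\mathbf K}_n^{-1}y,\qquad \mathbf V_n=\mathbf M_r(\mathbf R_n^T\widetilde{\mathbf K}_n^{-1}\mathbf R_n)^{-1}\mathbf M_r.$$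
   Context: ${\mathscr X}$ is a nonempty measurable space; $K:{\mathscr X}\times{\mathscr X}\to\mathbb{R}$ is symmetric, measurable, uniformly bounded ($\sup|K|<\infty$) and strictly positive definite ($\mathbf K_n=(K(x_i,x_j))_{i,j}$ positive definite for pairwise distinct points). Let $\mathbf R_n=(r_j(x_i))_{i=1..n,\,j=0..p}$, $\mathbf k_n(x)=(K(x,x_1),\dots,K(x,x_n))^T$, $\mathbf P_n(\mu)=\int r(x)\mathbf k_n^T(x)\,d\mu(x)$ ($(p+1)\times n$), $\mathbf U(\mu)=\int\int r(x)r^T(x')K(x,x')\,d\mu(x)\,d\mu(x')$, $\hat\beta=(\mathbf R_n^T\mathbf K_n^{-1}\mathbf R_n)^{-1}\mathbf R_n^T\mathbf K_n^{-1}y$, $\widehat{\mathbf I}_n=\mathbf M_r\hat\beta+\mathbf P_n(\mu)\mathbf K_n^{-1}(y-\mathbf R_n\hat\beta)$, and $\mathbf V_n=\mathbf U(\mu)-\mathbf P_n(\mu)\mathbf K_n^{-1}\mathbf P_n^T(\mu)+[\mathbf M_r-\mathbf P_n(\mu)\mathbf K_n^{-1}\mathbf R_n](\mathbf R_n^T\mathbf K_n^{-1}\mathbf R_n)^{-1}[\mathbf M_r-\mathbf P_n(\mu)\mathbf K_n^{-1}\mathbf R_n]^T$. With $\mathbf u_\mu(x)=\int r(x')K(x',x)\,d\mu(x')$, the reduced kernel is $K_\mu(x,x')=K(x,x')-\mathbf u_\mu^T(x)\mathbf M_r^{-1}r(x')-r^T(x)\mathbf M_r^{-1}\mathbf u_\mu(x')+r^T(x)\mathbf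 M_r^{-1}\mathbf U(\mu)\mathbf M_r^{-1}r(x')$, and $\widetilde{\mathbf K}_n=(K_\mu(x_i,x_j))_{i,j=1}^n$. *)

(* Defs.v *)
From HB Require Import structures.
From mathcomp Require Import all_boot all_order all_algebra.
Set Implicit Arguments. Unset Strict Implicit. Unset Printing Implicit Defensive.
Import Order.TTheory GRing.Theory Num.Theory.
Local Open Scope ring_scope.

Section KrigingDefs.
Variables (R : realFieldType) (X : Type).

Definition posdef n (A : 'M[R]_n) : Prop :=
  forall v : 'cV[R]_n, v != 0 -> 0 < (v^T *m A *m v) ord0 ord0.

Definition kernel_symmetric (K : X -> X -> R) : Prop :=
  forall x x', K x x' = K x' x.

Definition kernel_bounded (K : X -> X -> R) : Prop :=
  exists c : R, forall x x', `|K x x'| <= c.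

Definition fun_bounded (f : X -> R) : Prop :=
  exists c : R, forall x, `|f x| <= c.

Definition strictly_pd (K : X -> X -> R) : Prop :=
  forall (n : nat) (x : 'I_n -> X), injective x ->
    posdef (\matrix_(i, j) K (x i) (x j)).

(* Abstract integral against a probability measure mu: a normalised, positive,
   linear functional on bounded functions. *)
Definition prob_integral (I : (X -> R) -> R) : Prop :=
  [/\ forall f g, fun_bounded f -> fun_bounded g ->
        I (fun x => f x + g x) = I f + I g,
      forall (c : R) f, fun_bounded f -> I (fun x => c * f x) = c * I f,
      forall f, fun_bounded f -> (forall x, 0 <= f x) -> 0 <= I f
    & I (fun _ => 1) = 1].

Variables (p n : nat) (I : (X -> R) -> R) (K : X -> X -> R)
          (r : 'I_p.+1 -> X -> R) (x : 'I_n -> X).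

Definition rvec (z : X) : 'cV[R]_p.+1 := \col_j r j z.
Definition Rn : 'M[R]_(n, p.+1) := \matrix_(i, j) r j (x i).
Definition Kn : 'M[R]_n := \matrix_(i, j) K (x i) (x j).
Definition Mr : 'M[R]_p.+1 := \matrix_(j, k) I (fun z => r j z * r k z).
Definition Pn : 'M[R]_(p.+1, n) := \matrix_(j, i) I (fun z => r j z * K z (x i)).
Definition Umu : 'M[R]_p.+1 :=
  \matrix_(j, k) I (fun z => I (fun z' => r j z * r k z' * K z z')).
Definition umu (z : X) : 'cV[R]_p.+1 := \col_j I (fun z' => r j z' * K z' z).

Definition Kmu (z z' : X) : R :=
  K z z' - ((umu z)^T *m invmx Mr *m rvec z') ord0 ord0
         - ((rvec z)^T *m invmx Mr *m umu z') ord0 ord0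
         + ((rvec z)^T *m invmx Mr *m Umu *m invmx Mr *m rvec z') ord0 ord0.

Definition Ktilde : 'M[R]_n := \matrix_(i, j) Kmu (x i) (x j).

Definition betahat (y : 'cV[R]_n) : 'cV[R]_p.+1 :=
  invmx (Rn^T *m invmx Kn *m Rn) *m Rn^T *m invmx Kn *m y.

Definition Ihat (y : 'cV[R]_n) : 'cV[R]_p.+1 :=
  Mr *m betahat y + Pn *m invmx Kn *m (y - Rn *m betahat y).

Definition Vn : 'M[R]_p.+1 :=
  Umu - Pn *m invmx Kn *m Pn^T
  + (Mr - Pn *m invmx Kn *m Rn) *m invmx (Rn^T *m invmx Kn *m Rn)
      *m (Mr - Pn *m invmx Kn *m Rn)^T.

End KrigingDefs.

(* Main.v *)
Require Import Defs.
From HB Require Import structures.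
From mathcomp Require Import all_boot all_order all_algebra.
Import Order.TTheory GRing.Theory Num.Theory.
Local Open Scope ring_scope.
From Stdlib Require Import FunctionalExtensionality.

Lemma zperm (V : zmodType) (U a b c d e : V) :
  U - e + (a - b - (c - d)) = a - c - (b + (e - d)) + U.
Proof.
rewrite [RHS]addrC !opprD !opprK !addrA.
rewrite -[U - e + a]addrAC. rewrite -[U + a - e - b]addrAC -[U + a - b - e - c]addrAC.
rewrite -[U + a - b - c]addrAC. done.
Qed.

Lemma trB (F : fieldType) m n (A B : 'M[F]_(m, n)) : (A - B)^T = A^T - B^T.
Proof. by apply/matrixP => i j; rewrite !mxE. Qed.

Lemma alg (F : fieldType) (m n : nat) (M U : 'M[F]_m.+1) (P : 'M[F]_(m.+1, n))
  (Rn : 'M[F]_(n, m.+1)) (K Kt : 'M[F]_n) :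
  K \in unitmx -> Rn^T *m invmx K *m Rn \in unitmx -> M \in unitmx ->
  Kt \in unitmx -> M^T = M -> (invmx K)^T = invmx K ->
  Kt = K - P^T *m invmx M *m Rn^T - Rn *m invmx M *m P
        + Rn *m invmx M *m U *m invmx M *m Rn^T ->
  let W := invmx K in let B := invmx (Rn^T *m W *m Rn) in
  let L := M *m B *m Rn^T *m W + P *m W *m (1%:M - Rn *m B *m Rn^T *m W) in
  let G := Rn^T *m invmx Kt *m Rn in
  L = M *m invmx G *m Rn^T *m invmx Kt /\
  U - P *m W *m P^T + (M - P *m W *m Rn) *m B *m (M - P *m W *m Rn)^T
   = M *m invmx G *m M.
Proof.
move=> hK hG hM hKt hMT hWT eKt W B L G.
have eL : L = M *m B *m Rn^T *m W + P *m W *m (1%:M - Rn *m B *m Rn^T *m W) by [].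
clearbody L.
have kW X : X *m W *m K = X by rewrite mulmxKV.
have kK X : X *m K *m W = X by rewrite mulmxK.
have kB (k : nat) (X : 'M_(k, m.+1)) : X *m B *m Rn^T *m W *m Rn = X.
  have -> : X *m B *m Rn^T *m W *m Rn = X *m B *m (Rn^T *m W *m Rn) by rewrite !mulmxA.
  by rewrite mulmxKV.
have kM (k : nat) (X : 'M_(k, m.+1)) : X *m M *m invmx M = X by rewrite mulmxK.
have kMi (k : nat) (X : 'M_(k, m.+1)) : X *m invmx M *m M = X by rewrite mulmxKV.
have LR : L *m Rn = M.
  by rewrite eL mulmxDl mulmxBr mulmx1 !mulmxA mulmxBl !kB subrr addr0.
set Q := M *m B - P *m W *m Rn *m B - L *m P^T *m invmx M + U *m invmx M.
have LKt : L *m Kt = Q *m Rn^T.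
  have LK : L *m K = M *m B *m Rn^T + P - P *m W *m Rn *m B *m Rn^T.
    rewrite eL mulmxDl mulmxBr mulmx1 !mulmxA mulmxBl !kW.
    by rewrite addrA.
  rewrite eKt !mulmxDr ?mulmxN !mulmxA LR mulmxV // !mul1mx LK.
  rewrite /Q !mulmxDl ?mulNmx.
  rewrite [M *m B *m Rn^T + P - _]addrAC [_ + P - _]addrAC addrK.
  done.
have eLt : L = Q *m Rn^T *m invmx Kt by rewrite -LKt mulmxK.
have MQG : M = Q *m G by rewrite -LR eLt /G !mulmxA.
have hGu : G \in unitmx by move: hM; rewrite MQG unitmx_mul => /andP[].
have eQ : Q = M *m invmx G by rewrite MQG mulmxK.
split; first by rewrite eLt eQ.
rewrite -eQ /Q !mulmxDl ?mulNmx kMi eL.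
rewrite trB !trmx_mul hMT hWT.
rewrite ?mulmxDl ?mulmxDr ?mulmxBl ?mulmxBr ?mulNmx ?mulmxN !mulmxA mulmx1.
rewrite !kMi ?mulmxBl ?mulmxA.
exact: zperm.
Qed.

Lemma entryE (F : fieldType) (m a c : nat) (X : 'M[F]_(m, a)) (D : 'M[F]_(a, c)) i j :
  (X *m D) i j = (row i X *m col j D) ord0 ord0.
Proof. by rewrite !mxE; apply: eq_bigr => k _; rewrite !mxE. Qed.

Lemma entryE2 (F : fieldType) (m a c : nat) (X : 'M[F]_(m, a)) (D : 'M[F]_(a, c)) i j :
  (row i (X *m col j D)) ord0 ord0 = (X *m D) i j.
Proof. by rewrite !mxE; apply: eq_bigr => k _; rewrite !mxE. Qed.

Lemma posdef_unit (R : realFieldType) n (A : 'M[R]_n) : posdef A -> A \in unitmx.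
Proof.
move=> hA; rewrite unitmxE unitfE; apply/negP => /det0P [v vn0 vA].
have := hA v^T; rewrite trmx_eq0 => /(_ vn0); rewrite trmxK vA mul0mx mxE.
by rewrite ltxx.
Qed.

Theorem lemmaB1 (R : realFieldType) (X : Type) (p n : nat)
  (I : (X -> R) -> R) (K : X -> X -> R) (r : 'I_p.+1 -> X -> R)
  (x : 'I_n -> X) :
  prob_integral I ->
  kernel_symmetric K -> kernel_bounded K -> strictly_pd K ->
  (forall j, fun_bounded (r j)) ->
  (forall z, r ord0 z = 1) ->
  Mr I r \in unitmx ->
  injective x ->
  \rank (Rn r x) = p.+1 ->
  Ktilde I K r x \in unitmx ->
  forall y : 'cV[R]_n,
    Ihat I K r x y =
      Mr I r *m invmx ((Rn r x)^T *m invmx (Ktilde I K r x) *m Rn r x)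
        *m (Rn r x)^T *m invmx (Ktilde I K r x) *m y
    /\ Vn I K r x =
      Mr I r *m invmx ((Rn r x)^T *m invmx (Ktilde I K r x) *m Rn r x)
        *m Mr I r.
Proof.
move=> _ hsym _ hspd _ _ hM hinj hrk hKt y.
have pdK : posdef (Kn K x) by exact: hspd.
have hK : Kn K x \in unitmx by exact: posdef_unit.
have KT : (Kn K x)^T = Kn K x by apply/matrixP => i j; rewrite !mxE hsym.
have WT : (invmx (Kn K x))^T = invmx (Kn K x) by rewrite trmx_inv KT.
have MT : (Mr I r)^T = Mr I r.
  apply/matrixP => i j; rewrite !mxE; congr I.
  by apply: functional_extensionality => z; rewrite mulrC.
have hG : (Rn r x)^T *m invmx (Kn K x) *m Rn r x \in unitmx.
  rewrite unitmxE unitfE; apply/negP => /det0P [v vn0 vG].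
  have rf : row_free (Rn r x)^T by rewrite /row_free mxrank_tr hrk.
  have un0 : v *m (Rn r x)^T != 0 by rewrite mulmx_free_eq0.
  have wn0 : v *m (Rn r x)^T *m invmx (Kn K x) != 0.
    apply: contraNneq un0 => h0.
    by rewrite -(mulmxKV hK (v *m (Rn r x)^T)) h0 mul0mx.
  have := pdK (v *m (Rn r x)^T *m invmx (Kn K x))^T.
  rewrite trmx_eq0 => /(_ wn0).
  rewrite trmxK !trmx_mul WT trmxK mulmxKV //.
  rewrite !mulmxA -[v *m _ *m _ *m _]mulmxA.
  by rewrite -[v *m _ *m (_ *m _)]mulmxA [_^T *m (_ *m _)]mulmxA vG mul0mx mxE ltxx.
have eKt : Ktilde I K r x = Kn K x
   - (Pn I K r x)^T *m invmx (Mr I r) *m (Rn r x)^T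
   - Rn r x *m invmx (Mr I r) *m Pn I K r x
   + Rn r x *m invmx (Mr I r) *m Umu I K r *m invmx (Mr I r) *m (Rn r x)^T.
  have eu i : (umu I K r (x i))^T = row i (Pn I K r x)^T.
    by apply/matrixP => a b; rewrite !mxE.
  have er j : rvec r (x j) = col j (Rn r x)^T.
    by apply/matrixP => a b; rewrite !mxE.
  have er' i : (rvec r (x i))^T = row i (Rn r x).
    by apply/matrixP => a b; rewrite !mxE.
  have eu' j : umu I K r (x j) = col j (Pn I K r x).
    by apply/matrixP => a b; rewrite !mxE.
  apply/matrixP => i j.
  have addE (A B : 'M[R]_n) : (A + B) i j = A i j + B i j by rewrite mxE.
  have oppE (A : 'M[R]_n) : (- A) i j = - A i j by rewrite mxE.
  rewrite [in LHS]mxE /Kmu eu er er' eu' -!row_mul !entryE2 [in RHS]mxE.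
  by rewrite !addE !oppE [Kn K x i j]mxE.
have [E1 E2] := @alg R p n _ _ _ _ _ _ hK hG hM hKt MT WT eKt.
split; last exact: E2.
rewrite -E1 /Ihat /betahat.
by rewrite !mulmxBr mulmxDl mulmxBl mulmx1 !mulmxA.
Qed.
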